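(* For every $n\in\mathbb Z$, $R_{1,n}$ is a Laurent polynomial in $R_{1,0},\dots,R_{r,0},R_{1,1},\dots,R_{r,1}$ with nonnegative integer coefficients.
   Context: Fix $r\ge1$, $I_r=\{1,\dots,r\}$. Let $R_{1,0},\dots,R_{r,0},R_{1,1},\dots,R_{r,1}$ be algebraically independent indeterminates over $\mathbb Q$ and $(R_{\alpha,n})_{0\le\alpha\le r+1,n\in\mathbb Z}$ the $A_r$ $Q$-system: the unique family of nonzero elements of $\mathbb Q(R_{1,0},\dots,R_{r,1})$ with these initial values, $R_{0,n}=R_{r+1,n}=1$, and $R_{\alpha,n+1}R_{\alpha,n-1}=R_{\alpha,n}^2+R_{\alpha+1,n}R_{\alpha-1,n}$ ($\alpha\in I_r$, $n\in\mathbb Z$). *)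

(* Defs.v *)
From HB Require Import structures.
From mathcomp Require Import all_boot all_order all_algebra.
From mathcomp Require Import fraction.
Set Implicit Arguments. Unset Strict Implicit. Unset Printing Implicit Defensive.
Import Order.TTheory GRing.Theory Num.Theory.
Local Open Scope ring_scope.

(* ratfun m = Q(X_0, ..., X_{m-1}), built iteratively as
   Q(X_0,...,X_{m-1}) = Frac(Q(X_0,...,X_{m-2})[X_{m-1}]). *)
Fixpoint ratfun (m : nat) : fieldType :=
  match m with
  | 0 => rat
  | m'.+1 => {fraction {poly ratfun m'}}
  end.

Definition ratfun_up (m : nat) (c : ratfun m) : ratfun m.+1 :=
  tofrac (c%:P).

(* the indeterminate X_i in ratfun m (0 when i >= m) *)
Fixpoint ratfun_var (m : nat) (i : nat) : ratfun m :=
  match m return ratfun m with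
  | 0 => 0
  | m'.+1 => if i == m' then (tofrac 'X : ratfun m'.+1)
             else ratfun_up (ratfun_var m' i)
  end.

Definition nonneg_laurent (K : unitRingType) (m : nat) (x : 'I_m -> K) (f : K)
  : Prop :=
  exists s : seq (nat * {ffun 'I_m -> int}),
    f = \sum_(t <- s) (t.1)%:R * \prod_(i < m) (x i) ^ (t.2 i).

(* The A_r Q-system: R alpha n for 0 <= alpha <= r+1, n in Z, in the field
   Q(R_{1,0},...,R_{r,0},R_{1,1},...,R_{r,1}) = ratfun (2r), where
   R_{alpha,0} is the indeterminate X_{alpha-1} and R_{alpha,1} is X_{r+alpha-1}. *)
Definition is_Ar_Qsystem (r : nat) (R : nat -> int -> ratfun (r + r)) : Prop :=
  [/\ (forall alpha, (1 <= alpha <= r)%N -> R alpha 0 = ratfun_var (r + r) alpha.-1),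
      (forall alpha, (1 <= alpha <= r)%N -> R alpha 1 = ratfun_var (r + r) (r + alpha.-1)),
      (forall n, R 0%N n = 1 /\ R r.+1 n = 1),
      (forall alpha n, (1 <= alpha <= r)%N -> R alpha n != 0) &
      (forall alpha n, (1 <= alpha <= r)%N ->
         R alpha (n + 1) * R alpha (n - 1) = R alpha n ^+ 2 + R alpha.+1 n * R alpha.-1 n)].

Definition Qsys_vars (r : nat) (i : 'I_(r + r)) : ratfun (r + r) :=
  ratfun_var (r + r) i.
Arguments is_Ar_Qsystem r R : clear implicits.
Arguments Qsys_vars r i : clear implicits.
Arguments nonneg_laurent K m x f : clear implicits.

(* Main.v *)
Require Import Defs.
From HB Require Import structures.
From mathcomp Require Import all_boot all_order all_algebra.
From mathcomp Require Import fraction.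
From Stdlib Require Import Field_theory Ring_theory Field_tac Ring.
Set Implicit Arguments. Unset Strict Implicit. Unset Printing Implicit Defensive.
Local Open Scope ring_scope.
Import GRing.Theory.

Section Gen.
Variable F : fieldType.
Definition addF (x y : F) : F := x + y.
Definition mulF (x y : F) : F := x * y.
Definition oppF (x : F) : F := - x.
Definition invF (x : F) : F := x^-1.
Definition subF (x y : F) : F := addF x (oppF y).
Definition divF (x y : F) : F := mulF x (invF y).
Definition zeroF : F := 0.
Definition oneF : F := 1.
Lemma Fth : @field_theory F zeroF oneF addF mulF subF oppF divF invF (@eq F).
Proof.
split.
- split; rewrite /addF /mulF /subF /oppF /zeroF /oneF; [exact: add0r|exact: addrC|exact: addrA|exact: mul1r|exact: mulrC|exact: mulrA|exact: mulrDl|by []|exact: subrr].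
- by apply/eqP; rewrite oner_neq0.
- by [].
- by move=> p /eqP hp; rewrite /mulF /invF mulVf.
Qed.
Add Field Ffield : Fth.
Lemma addFE (x y : F) : x + y = addF x y. Proof. by []. Qed.
Lemma mulFE (x y : F) : x * y = mulF x y. Proof. by []. Qed.
Lemma oppFE (x : F) : - x = oppF x. Proof. by []. Qed.
Lemma invFE (x : F) : x^-1 = invF x. Proof. by []. Qed.
Lemma zeroFE : 0 = zeroF :> F. Proof. by []. Qed.
Lemma oneFE : 1 = oneF :> F. Proof. by []. Qed.
Ltac toF := rewrite ?expr2 ?invFE ?mulFE ?oppFE ?addFE ?zeroFE ?oneFE;
  match goal with |- @eq _ ?x ?y => change (@eq F x y) end.

Variable r : nat.

Definition xw (a b : nat -> F) (i : nat) : F := b i.+1 * a i / (a i.+1 * b i).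
Definition zw (a b : nat -> F) (i : nat) : F :=
  if (i < r)%N then b i.+2 * a i / (a i.+1 * b i.+1) else 0.
Definition Km (a b : nat -> F) : 'M[F]_r.+1 :=
  \matrix_(i, j) (xw a b i *+ (j <= i)%N + zw a b i *+ (j <= i.+1)%N).
Definition Ubm (a b : nat -> F) : 'M[F]_r.+1 :=
  \matrix_(i, j) (xw a b i *+ (j == i :> nat) + zw a b i *+ (j == i.+1 :> nat)).
Definition Jm : 'M[F]_r.+1 := \matrix_(i, j) ((1 : F) *+ (j <= i)%N).
Definition Hm (a b : nat -> F) : 'M[F]_r.+1 :=
  \matrix_(i, j) (xw a b j *+ (j <= i)%N + zw a b j.-1 *+ ((0 < j) && (j <= i.+1))%N).
Definition sv (a b : nat -> F) : 'rV[F]_r.+1 := \row_j (xw a b j + zw a b j).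

Lemma sum_delta (f : 'I_r.+1 -> F) (m : nat) :
  \sum_(k < r.+1) f k *+ (k == m :> nat) = if (m < r.+1)%N then f (inord m) else 0.
Proof.
case: ifP => hm.
  rewrite (bigD1 (inord m)) //= inordK // eqxx mulr1n big1 ?addr0 // => k hk.
  rewrite (_ : (k == m :> nat) = false) ?mulr0n //; apply/negbTE.
  apply: contra hk => /eqP e; apply/eqP/val_inj; rewrite /= inordK //.
rewrite big1 // => k _; rewrite (_ : (k == m :> nat) = false) ?mulr0n //.
apply/negbTE; apply: contraFN hm => /eqP <-; exact: ltn_ord.
Qed.

Lemma KUJ a b : Km a b = Ubm a b *m Jm.
Proof.
apply/matrixP => i j; rewrite !mxE.
rewrite (eq_bigr (fun k : 'I_r.+1 => (xw a b i * Jm k j) *+ (k == i :> nat)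
   + (zw a b i * Jm k j) *+ (k == i.+1 :> nat))); last first.
  by move=> k _; rewrite !mxE mulrDl -!mulrnAl !(eq_sym (val k)).
rewrite big_split /= !sum_delta (ltn_ord i) !mxE inord_val mulrnAr mulr1.
case: ifP => hi; last by rewrite ltnS in hi; rewrite /zw hi mul0rn.
by rewrite inordK // mulr_natr.
Qed.

Lemma HJU a b : Hm a b = Jm *m Ubm a b.
Proof.
apply/matrixP => i j; rewrite !mxE.
rewrite (eq_bigr (fun k : 'I_r.+1 => (xw a b k *+ (k <= i)%N) *+ (k == j :> nat)
   + ((zw a b k *+ (k <= i)%N) *+ (0 < j)%N) *+ (k == j.-1 :> nat))); last first.
  move=> k _; rewrite !mxE (eq_sym (val j)).
  have -> : (j == k.+1 :> nat) = (0 < j)%N && (k == j.-1 :> nat).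
    by case: (val j) => [|j'] //=; rewrite eqSS eq_sym.
  by case: (k <= i)%N; case: (0 < j)%N; case: (k == j :> nat); case: (k == j.-1 :> nat);
     rewrite ?mulr1n ?mulr0n ?mul1r ?mul0r ?addr0 ?add0r.
rewrite big_split /= !sum_delta (ltn_ord j) inord_val.
have hj : (j.-1 < r.+1)%N by apply: leq_ltn_trans (leq_pred _) (ltn_ord j).
rewrite hj inordK //.
by case: (val j) => [|j'] //=; rewrite ?mulr0n.
Qed.

Section Seed.
Variables a b c : nat -> F.
Hypotheses (ha0 : a 0%N = 1) (hb0 : b 0%N = 1) (hc0 : c 0%N = 1)
  (haR : a r.+1 = 1) (hbR : b r.+1 = 1) (hcR : c r.+1 = 1).
Hypotheses (hanz : forall al, (al <= r.+1)%N -> a al != 0)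
  (hbnz : forall al, (al <= r.+1)%N -> b al != 0)
  (hcnz : forall al, (al <= r.+1)%N -> c al != 0).
Hypothesis hrec : forall al, (0 < al <= r)%N -> c al * a al = b al ^+ 2 + b al.+1 * b al.-1.

Ltac nz := repeat split; apply/eqP;
  first [apply: hanz | apply: hbnz | apply: hcnz]; by [|apply: ltnW|apply: leqW|apply: ltnW; apply: leqW].

Lemma sform j : (j <= r)%N -> xw a b j + zw a b j = a j * c j.+1 / (b j * b j.+1).
Proof.
move=> hjr; rewrite /zw; case: ltnP => hj.
  have e := hrec (al := j.+1) hj.
  have hc : c j.+1 = (b j.+1 ^+ 2 + b j.+2 * b j) / a j.+1.
    by rewrite -e mulfK //; apply: hanz; apply: ltnW.
  have h1 : a j.+1 <> 0 by apply/eqP; apply: hanz; apply: ltnW.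
  have h2 : b j <> 0 by apply/eqP; apply: hbnz; apply: leqW.
  have h3 : b j.+1 <> 0 by apply/eqP; apply: hbnz; apply: ltnW.
  rewrite hc /xw; toF; field; repeat split; assumption.
have -> : j = r by apply/eqP; rewrite eqn_leq hjr hj.
have h2 : b r <> 0 by apply/eqP; apply: hbnz; apply: leqW.
rewrite /xw haR hbR hcR; toF; field; repeat split; try assumption.
Qed.

Lemma sform' j : (j <= r)%N ->
  xw b c j + (if (0 < j)%N then zw b c j.-1 else 0) = a j * c j.+1 / (b j * b j.+1).
Proof.
case: j => [|k] hk /=.
  have h3 : b 1%N <> 0 by apply/eqP; apply: hbnz.
  by rewrite addr0 /xw ha0 hb0 hc0; toF; field; assumption.
have hkr : (k < r)%N by [].
have e := hrec (al := k.+1) hk.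
have ha : a k.+1 = (b k.+1 ^+ 2 + b k.+2 * b k) / c k.+1.
  by rewrite -e [c _ * _]mulrC mulfK //; apply: hcnz; apply: leqW.
have h1 : c k.+1 <> 0 by apply/eqP; apply: hcnz; apply: leqW.
have h2 : b k.+1 <> 0 by apply/eqP; apply: hbnz; apply: leqW.
have h3 : b k.+2 <> 0 by apply/eqP; apply: hbnz.
rewrite /zw hkr ha /xw; toF; field; repeat split; assumption.
Qed.

Lemma I2 i : (i < r)%N ->
  zw a b i * (xw a b i.+1 + zw a b i.+1) = (xw a b i + zw a b i) * zw b c i.
Proof.
move=> hi; rewrite (sform (j:=i.+1)) // (sform (j:=i)); last exact: ltnW.
have h1 : a i.+1 <> 0 by apply/eqP; apply: hanz; apply: ltnW.
have h2 : b i <> 0 by apply/eqP; apply: hbnz; apply: leqW; apply: ltnW.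
have h3 : b i.+1 <> 0 by apply/eqP; apply: hbnz; apply: ltnW.
have h4 : b i.+2 <> 0 by apply/eqP; apply: hbnz.
have h5 : c i.+1 <> 0 by apply/eqP; apply: hcnz; apply: ltnW.
rewrite /zw hi; toF; field; repeat split; assumption.
Qed.

Lemma KDH : Km a b *m diag_mx (sv a b) = diag_mx (sv a b) *m Hm b c.
Proof.
rewrite mul_mx_diag mul_diag_mx; apply/matrixP => i j; rewrite !mxE.
have hi := ltn_ord i; have hj := ltn_ord j; rewrite !ltnS in hi hj.
case: (leqP j i) => hji.
  have hj1 : (j <= i.+1)%N by apply: leq_trans hji (leqnSn _).
  rewrite hj1 andbT !mulr1n.
  rewrite (_ : xw b c j + zw b c j.-1 *+ (0 < j)%N = xw a b j + zw a b j).
    by rewrite mulrC.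
  rewrite sform // -(sform' hj); by case: (0 < j)%N; rewrite ?mulr1n ?mulr0n.
case: (leqP j i.+1) => hji1; last by rewrite andbF !mulr0n !addr0 mul0r mulr0.
have ej : val j = i.+1 by apply/eqP; rewrite eqn_leq hji1 hji.
rewrite !mulr0n !add0r !mulr1n ej /= mulr1n I2 //.
by rewrite -ltnS -ej.
Qed.

Lemma powKH k : Km a b ^+ k * diag_mx (sv a b) = diag_mx (sv a b) * Hm b c ^+ k.
Proof.
elim: k => [|k IH]; first by rewrite !expr0 mul1r mulr1.
rewrite exprS -mulrA IH mulrA.
have := KDH; rewrite !mulmxE => ->.
by rewrite -mulrA -exprS.
Qed.
End Seed.

Lemma powH a b k : Hm a b ^+ k.+1 = Jm * Km a b ^+ k * Ubm a b.
Proof.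
elim: k => [|k IH]; first by rewrite expr1 expr0 mulr1 HJU mulmxE.
by rewrite exprSr IH HJU KUJ !mulmxE [in RHS]exprSr !mulrA.
Qed.

Lemma J00 a b (M : 'M[F]_r.+1) : (Jm * M * Ubm a b) 0 0 = M 0 0 * xw a b 0.
Proof.
rewrite -!mulmxE !mxE.
rewrite (eq_bigr (fun k : 'I_r.+1 => ((Jm *m M) 0 k * xw a b k) *+ (k == 0%N :> nat))); last first.
  move=> k _; rewrite !mxE /=; case: (val k) => [|k'] /=;
  by rewrite ?mulr0n ?addr0 ?mulr1n ?mulr0.
rewrite sum_delta /= !mxE.
rewrite (eq_bigr (fun k : 'I_r.+1 => (M k (inord 0)) *+ (k == 0%N :> nat))); last first.
  move=> k _; rewrite !mxE /=; case: (val k) => [|k'] /=;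
  by rewrite ?mulr1n ?mul1r ?mulr0n ?mul0r.
rewrite sum_delta /=.
have -> : (inord 0 : 'I_r.+1) = 0 by apply/val_inj; rewrite /= inordK.
by [].
Qed.

Lemma mul_mx_diagR (A : 'M[F]_r.+1) d i j : (A * diag_mx d) i j = A i j * d 0 j.
Proof. by rewrite -mulmxE mul_mx_diag mxE. Qed.
Lemma mul_diag_mxR (A : 'M[F]_r.+1) d i j : (diag_mx d * A) i j = d 0 i * A i j.
Proof. by rewrite -mulmxE mul_diag_mx mxE. Qed.

Lemma step a b c : a 0%N = 1 -> b 0%N = 1 -> c 0%N = 1 ->
  a r.+1 = 1 -> b r.+1 = 1 -> c r.+1 = 1 ->
  (forall al, (al <= r.+1)%N -> a al != 0) ->
  (forall al, (al <= r.+1)%N -> b al != 0) ->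
  (forall al, (al <= r.+1)%N -> c al != 0) ->
  (forall al, (0 < al <= r)%N -> c al * a al = b al ^+ 2 + b al.+1 * b al.-1) ->
  forall k, (Km a b ^+ k.+1) 0 0 = xw b c 0 * (Km b c ^+ k) 0 0.
Proof.
move=> ha0 hb0 hc0 haR hbR hcR hanz hbnz hcnz hrec k.
have h := congr1 (fun M : 'M[F]_r.+1 => M 0 0) (powKH ha0 hb0 hc0 haR hbR hcR hanz hbnz hcnz hrec k.+1).
move: h; rewrite /= powH mul_mx_diagR mul_diag_mxR J00 !mxE.
have hs : xw a b 0 + zw a b 0 != 0.
  rewrite (sform haR hbR hcR hanz hbnz hrec) // ha0 hb0 !mul1r.
  by apply: mulf_neq0; [apply: hcnz | rewrite invr_neq0 //; apply: hbnz].
move=> h; apply: (mulIf hs); rewrite h mulrC; congr (_ * _); exact: mulrC.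
Qed.

Section QP.
Variable Q : nat -> int -> F.
Hypothesis hQb : forall n, Q 0%N n = 1 /\ Q r.+1 n = 1.
Hypothesis hQnz : forall al n, (1 <= al <= r)%N -> Q al n != 0.
Hypothesis hQrec : forall al n, (1 <= al <= r)%N ->
  Q al (n + 1) * Q al (n - 1) = Q al n ^+ 2 + Q al.+1 n * Q al.-1 n.

Lemma Qnz al n : (al <= r.+1)%N -> Q al n != 0.
Proof.
move=> h; case: al h => [|al] h; first by rewrite (proj1 (hQb n)) oner_neq0.
case: (ltnP al r) => h2; first by apply: hQnz.
have -> : al = r by apply/eqP; rewrite eqn_leq h2 andbT -ltnS.
by rewrite (proj2 (hQb n)) oner_neq0.
Qed.

Lemma Qpath k : forall n : int,
  Q 1%N (n + 1 + k%:Z) = Q 1%N (n + 1) * (Km (fun al => Q al n) (fun al => Q al (n + 1)) ^+ k) 0 0.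
Proof.
elim: k => [|k IH] n.
  by rewrite addr0 expr0 !mxE mulr1.
rewrite (@step (fun al => Q al n) (fun al => Q al (n + 1)) (fun al => Q al (n + 1 + 1))).
- rewrite intS addrA IH /xw /=.
  rewrite (proj1 (hQb (n+1))) (proj1 (hQb (n+1+1))) mulrA; congr (_ * _).
  have h1 : Q 1%N (n + 1) <> 0 by apply/eqP; apply: Qnz.
  by toF; field.
- exact: (proj1 (hQb _)).
- exact: (proj1 (hQb _)).
- exact: (proj1 (hQb _)).
- exact: (proj2 (hQb _)).
- exact: (proj2 (hQb _)).
- exact: (proj2 (hQb _)).
- by move=> al h; apply: Qnz.
- by move=> al h; apply: Qnz.
- by move=> al h; apply: Qnz.
- by move=> al h; have := hQrec (n + 1) h; rewrite addrK.
Qed.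
End QP.
End Gen.

Section Pos.
Variables (K : fieldType) (m : nat) (x : 'I_m -> K).
Hypothesis hx : forall i, x i != 0.
Local Notation P := (nonneg_laurent K m x).

Lemma P0 : P 0.
Proof. by exists [::]; rewrite big_nil. Qed.

Lemma Pnat n : P n%:R.
Proof.
exists [:: (n, [ffun => 0])]; rewrite big_cons big_nil addr0 big1 ?mulr1 //.
by move=> i _; rewrite (_ : (n, [ffun=> 0]).2 i = 0) ?expr0z //; exact: ffunE.
Qed.

Lemma PD f g : P f -> P g -> P (f + g).
Proof. by case=> s1 ->; case=> s2 ->; exists (s1 ++ s2); rewrite big_cat. Qed.

Lemma PM f g : P f -> P g -> P (f * g).
Proof.
case=> s1 ->; case=> s2 ->.
exists [seq (muln t.1 u.1, [ffun i => t.2 i + u.2 i]) | t : nat * {ffun 'I_m -> int} <- s1, u : nat * {ffun 'I_m -> int} <- s2].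
rewrite big_allpairs_dep /= mulr_suml; apply: eq_bigr => t _.
rewrite mulr_sumr; apply: eq_bigr => u _.
rewrite natrM.
under [in RHS]eq_bigr => i _ do rewrite ffunE expfzDr //.
by rewrite big_split /= mulrACA.
Qed.

Lemma Pmono i (e : int) : P (x i ^ e).
Proof.
exists [:: (1%N, [ffun j => if j == i then e else 0])].
rewrite big_cons big_nil addr0 mul1r (bigD1 i) //.
rewrite (_ : (1%N, [ffun j => if j == i then e else 0]).2 i = e); last by rewrite ffunE eqxx.
rewrite big1 ?Monoid.mulm1 // => j hj.
rewrite (_ : (1%N, [ffun j => if j == i then e else 0]).2 j = 0) ?expr0z //.
by rewrite ffunE (negbTE hj).
Qed.

Lemma Pvar i : P (x i).
Proof. by have := Pmono i 1; rewrite expr1z. Qed.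

Lemma Pinv i : P (x i)^-1.
Proof. by have := Pmono i (-1); rewrite -invr_expz expr1z. Qed.

Lemma P1 : P 1.
Proof. by have := Pnat 1; rewrite mulr1n. Qed.

Lemma Pnatmul f (b : bool) : P f -> P (f *+ b).
Proof. by case: b => h; rewrite ?mulr1n ?mulr0n //; exact: P0. Qed.

Lemma Psum n (G : 'I_n -> K) : (forall i, P (G i)) -> P (\sum_(i < n) G i).
Proof. by move=> h; apply: big_ind => //; [exact: P0 | exact: PD]. Qed.

Lemma Ppow n (A : 'M[K]_n.+1) : (forall i j, P (A i j)) -> forall k i j, P ((A ^+ k) i j).
Proof.
move=> hA; elim=> [|k IH] i j.
  by rewrite expr0 mxE; apply: Pnatmul; exact: (Pnat 1).
rewrite exprSr -mulmxE mxE; apply: Psum => l; apply: PM; [exact: IH | exact: hA].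
Qed.

Lemma PKm r (a b : nat -> K) :
  (forall al, (al <= r.+1)%N -> P (a al) /\ P (a al)^-1) ->
  (forall al, (al <= r.+1)%N -> P (b al) /\ P (b al)^-1) ->
  forall i j, P (Km r a b i j).
Proof.
move=> ha hb i j; rewrite mxE.
have hi := ltn_ord i.
have hxw : forall t, (t <= r)%N -> P (xw a b t).
  move=> t ht; rewrite /xw invfM mulrA.
  apply: PM; first apply: PM; first apply: PM.
  - by case: (hb t.+1 ht).
  - by case: (ha t (leqW ht)).
  - by case: (ha t.+1 ht).
  - by case: (hb t (leqW ht)).
apply: PD; apply: Pnatmul; first exact: hxw.
rewrite /zw; case: ifP => ht; last exact: P0.
rewrite invfM mulrA; apply: PM; first apply: PM; first apply: PM.
- by case: (hb i.+2 ht).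
- by case: (ha i (leqW (ltnW ht))).
- by case: (ha i.+1 (ltnW ht)).
- by case: (hb i.+1 (ltnW ht)).
Qed.
End Pos.
Unset Implicit Arguments.

Theorem mainTheorem10 (r : nat) (hr : (1 <= r)%N)
  (R : nat -> int -> ratfun (r + r)) (hR : is_Ar_Qsystem r R) :
  forall n : int,
    nonneg_laurent (ratfun (r + r)) (r + r) (Qsys_vars r) (R 1%N n).
Proof.
case: hR => hR1 hR2 hR3 hR4 hR5.
have hx : forall i, Qsys_vars r i != 0.
  move=> i; case: (ltnP i r) => hi.
    have := hR4 i.+1 0 hi; rewrite hR1 //.
  have hal : (1 <= (i - r).+1 <= r)%N.
    by rewrite /= -ltnS ltnS ltn_subLR // (ltn_ord i).
  have := hR4 _ 1 hal; rewrite hR2 //= subnKC //.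
have Pab : forall (t : int), (t == 0) || (t == 1) -> forall al, (al <= r.+1)%N ->
    nonneg_laurent (ratfun (r + r)) (r + r) (Qsys_vars r) (R al t) /\
    nonneg_laurent (ratfun (r + r)) (r + r) (Qsys_vars r) (R al t)^-1.
  move=> t ht al hal.
  case: al hal => [|al] hal.
    by rewrite (proj1 (hR3 t)) invr1; split; exact: P1.
  case: (ltnP al r) => h2; last first.
    have -> : al = r by apply/eqP; rewrite eqn_leq h2 andbT -ltnS.
    by rewrite (proj2 (hR3 t)) invr1; split; exact: P1.
  case/orP: ht => /eqP ->.
    have hlt : (al < r + r)%N by apply: leq_trans h2 (leq_addr _ _).
    rewrite hR1 //= -[ratfun_var _ _]/(Qsys_vars r (Ordinal hlt)).
    by split; [exact: Pvar | exact: Pinv].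
  have hlt : (r + al < r + r)%N by rewrite ltn_add2l.
  rewrite hR2 //= -[ratfun_var _ _]/(Qsys_vars r (Ordinal hlt)).
  by split; [exact: Pvar | exact: Pinv].
have hQb : forall n, R 0%N n = 1 /\ R r.+1 n = 1 by [].
case=> [[|k]|k].
- by case: (Pab 0 isT 1%N (leqW hr)).
- have := Qpath hQb hR4 hR5 k 0.
  have e0 : (0 : int) + 1 + k%:Z = k.+1 by [].
  have e1 : (0 : int) + 1 = 1 by [].
  rewrite e0 e1 => ->; apply: (PM hx).
    by case: (Pab 1 isT 1%N (leqW hr)).
  apply: (Ppow hx) => i j; apply: (PKm hx) => al hal.
    by apply: Pab.
  by apply: Pab.
- pose Q' := fun al (n : int) => R al (1 - n).
  have hQb' : forall n, Q' 0%N n = 1 /\ Q' r.+1 n = 1 by move=> n; apply: hR3.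
  have hQnz' : forall al n, (1 <= al <= r)%N -> Q' al n != 0 by move=> al n h; apply: hR4.
  have hQrec' : forall al n, (1 <= al <= r)%N ->
      Q' al (n + 1) * Q' al (n - 1) = Q' al n ^+ 2 + Q' al.+1 n * Q' al.-1 n.
    move=> al n h; rewrite /Q' -(hR5 _ _ h) mulrC.
    have -> : 1 - (n + 1) = 1 - n - 1 by rewrite opprD addrA.
    suff -> : 1 - (n - 1) = 1 - n + 1 by [].
    by rewrite opprB addrC.
  have := Qpath hQb' hQnz' hQrec' k.+1 0.
  rewrite /Q'.
  have e0 : 1 - ((0 : int) + 1 + (k.+1)%:Z) = Negz k.
    by rewrite add0r opprD addrA subrr add0r NegzE.
  have e1 : 1 - ((0 : int) + 1) = 0 by rewrite add0r subrr.
  have e2 : 1 - (0 : int) = 1 by rewrite subr0.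
  rewrite e0 e1 e2 => ->; apply: (PM hx).
    by case: (Pab 0 isT 1%N (leqW hr)).
  apply: (Ppow hx) => i j; apply: (PKm hx) => al hal; by apply: Pab.
Qed.
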